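(* Let $\{a_k\}_{k\ge0}$ with $\operatorname{Im}a_k>0$ be arbitrary and put $b_k:=\overline{a_{k-1}}$ for $k\ge1$; let $\{\Phi_k\}_{k\in\mathbb Z}$ be the associated system. Then for every integer $n\ge0$ and all real $x\ne t$, $$\sum_{k=-n}^{n-1}\overline{\Phi_k(x)}\,\Phi_k(t)=\frac{1}{t-x}\,\sin\Bigg(\int_x^t\sum_{k=0}^{n-1}\frac{2\operatorname{Im}a_k}{(u-\operatorname{Re}a_k)^2+(\operatorname{Im}a_k)^2}\,du\Bigg).$$
   Context: For $\mathbf a=\{a_k\}_{k\ge0}$ with $\operatorname{Im}a_k>0$: $\chi_k^+:=\frac{|1+a_k^2|}{1+a_k^2}$ (take $1$ if $1+a_k^2=0$), $B_0^+(z):=1$, $B_n^+(z):=\prod_{k=0}^{n-1}\chi_k^+\frac{z-a_k}{z-\overline{a_k}}$ ($n\ge1$), $\Phi_n^+(z):=\frac{\sqrt{\operatorname{Im}a_n}}{z-\overline{a_n}}B_n^+(z)$ ($n\ge0$). For $\mathbf b=\{b_k\}_{k\ge1}$ with $\operatorname{Im}b_k<0$: $\chi_k^-:=\frac{|1+b_k^2|}{1+b_k^2}$ (take $1$ if $1+b_k^2=0$), $B_1^-(z):=1$, $B_n^-(z):=\prod_{k=1}^{n-1}\chi_k^-\frac{z-b_k}{z-\overline{b_k}}$ ($n\ge2$), $\Phi_n^-(z):=\frac{\sqrt{-\operatorname{Im}b_n}}{z-\overline{b_n}}B_n^-(z)$ ($n\ge1$). Finally $\Phi_n:=\Phi_n^+$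 for $n=0,1,2,\dots$ and $\Phi_n:=\Phi_{-n}^-$ for $n=-1,-2,\dots$. *)

(* Defs.v *)
From Stdlib Require Import Reals ZArith.
Open Scope R_scope.

Record Cpx := mkC { Re : R; Im : R }.

Definition RtoC (x : R) : Cpx := mkC x 0.
Definition C0 : Cpx := mkC 0 0.
Definition C1 : Cpx := mkC 1 0.
Definition Cadd (z w : Cpx) : Cpx := mkC (Re z + Re w) (Im z + Im w).
Definition Cneg (z : Cpx) : Cpx := mkC (- Re z) (- Im z).
Definition Csub (z w : Cpx) : Cpx := Cadd z (Cneg w).
Definition Cmul (z w : Cpx) : Cpx :=
  mkC (Re z * Re w - Im z * Im w) (Re z * Im w + Im z * Re w).
Definition Cconj (z : Cpx) : Cpx := mkC (Re z) (- Im z).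
Definition Cnorm2 (z : Cpx) : R := Re z * Re z + Im z * Im z.
Definition Cabs (z : Cpx) : R := sqrt (Cnorm2 z).
Definition Cinv (z : Cpx) : Cpx := mkC (Re z / Cnorm2 z) (- Im z / Cnorm2 z).
Definition Cdiv (z w : Cpx) : Cpx := Cmul z (Cinv w).

Definition Cis0 (z : Cpx) : bool :=
  if Req_EM_T (Re z) 0 then (if Req_EM_T (Im z) 0 then true else false) else false.

Definition chi (c : Cpx) : Cpx :=
  let w := Cadd C1 (Cmul c c) in
  if Cis0 w then C1 else Cdiv (RtoC (Cabs w)) w.

Definition Bfactor (c z : Cpx) : Cpx :=
  Cmul (chi c) (Cdiv (Csub z c) (Csub z (Cconj c))).

Fixpoint Bplus (a : nat -> Cpx) (n : nat) (z : Cpx) : Cpx :=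
  match n with
  | O => C1
  | S m => Cmul (Bplus a m z) (Bfactor (a m) z)
  end.

Definition Phiplus (a : nat -> Cpx) (n : nat) (z : Cpx) : Cpx :=
  Cmul (Cdiv (RtoC (sqrt (Im (a n)))) (Csub z (Cconj (a n)))) (Bplus a n z).

(* B_n^-(z) = prod_{k=1}^{n-1} chi_k^- (z-b_k)/(z-conj b_k), for n >= 1 (B_1^- = 1) *)
Fixpoint Bminus (b : nat -> Cpx) (n : nat) (z : Cpx) : Cpx :=
  match n with
  | O => C1
  | S O => C1
  | S m => Cmul (Bminus b m z) (Bfactor (b m) z)
  end.

Definition Phiminus (b : nat -> Cpx) (n : nat) (z : Cpx) : Cpx :=
  Cmul (Cdiv (RtoC (sqrt (- Im (b n)))) (Csub z (Cconj (b n)))) (Bminus b n z).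

Definition Phi (a b : nat -> Cpx) (k : Z) (z : Cpx) : Cpx :=
  if Z.leb 0 k then Phiplus a (Z.to_nat k) z else Phiminus b (Z.to_nat (- k)) z.

Fixpoint sumZ (f : Z -> Cpx) (lo : Z) (len : nat) : Cpx :=
  match len with
  | O => C0
  | S m => Cadd (sumZ f lo m) (f (lo + Z.of_nat m)%Z)
  end.

Fixpoint rsum (g : nat -> R) (n : nat) : R :=
  match n with
  | O => 0
  | S m => rsum g m + g m
  end.

Definition integrand (a : nat -> Cpx) (n : nat) (u : R) : R :=
  rsum (fun k => 2 * Im (a k) / ((u - Re (a k)) ^ 2 + (Im (a k)) ^ 2)) n.

(* Main.v *)
From Pilot Require Import Defs.
From Stdlib Require Import Reals ZArith Lra Lia.
From Coquelicot Require Import Coquelicot.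
Import Pilot.Defs.
Open Scope R_scope.

Lemma Ceq (z w : Cpx) : Re z = Re w -> Im z = Im w -> z = w.
Proof. destruct z, w; simpl; intros -> ->; reflexivity. Qed.

Ltac cring := apply Ceq; simpl; ring.

Lemma Cconj_mul z w : Cconj (Cmul z w) = Cmul (Cconj z) (Cconj w).
Proof. cring. Qed.
Lemma Cconj_sub z w : Cconj (Csub z w) = Csub (Cconj z) (Cconj w).
Proof. cring. Qed.
Lemma Cconj_conj z : Cconj (Cconj z) = z.
Proof. cring. Qed.
Lemma Cconj_RtoC r : Cconj (RtoC r) = RtoC r.
Proof. cring. Qed.
Lemma Cnorm2_conj w : Cnorm2 (Cconj w) = Cnorm2 w.
Proof. unfold Cnorm2; simpl; ring. Qed.
Lemma Cconj_inv w : Cconj (Cinv w) = Cinv (Cconj w).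
Proof. unfold Cinv. rewrite Cnorm2_conj. apply Ceq; simpl; unfold Rdiv; ring. Qed.
Lemma Cconj_div z w : Cconj (Cdiv z w) = Cdiv (Cconj z) (Cconj w).
Proof. unfold Cdiv. rewrite Cconj_mul, Cconj_inv. reflexivity. Qed.

Lemma Cis0_conj w : Cis0 (Cconj w) = Cis0 w.
Proof.
  unfold Cis0; simpl.
  destruct (Req_EM_T (Re w) 0); auto.
  destruct (Req_EM_T (- Im w) 0), (Req_EM_T (Im w) 0); auto; lra.
Qed.

Lemma Cabs_conj w : Cabs (Cconj w) = Cabs w.
Proof. unfold Cabs. rewrite Cnorm2_conj. reflexivity. Qed.

Lemma chi_conj c : chi (Cconj c) = Cconj (chi c).
Proof.
  unfold chi.
  replace (Cadd C1 (Cmul (Cconj c) (Cconj c))) with (Cconj (Cadd C1 (Cmul c c))) by cring.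
  rewrite Cis0_conj. destruct (Cis0 _).
  - cring.
  - rewrite Cconj_div, Cconj_RtoC, Cabs_conj. reflexivity.
Qed.

Lemma Bfactor_conj c u : Bfactor (Cconj c) (RtoC u) = Cconj (Bfactor c (RtoC u)).
Proof.
  unfold Bfactor. rewrite Cconj_mul, chi_conj, Cconj_div, !Cconj_sub, !Cconj_conj, Cconj_RtoC.
  reflexivity.
Qed.

Lemma Bminus_conj a n u :
  Bminus (fun k => Cconj (a (k - 1)%nat)) (S n) (RtoC u) = Cconj (Bplus a n (RtoC u)).
Proof.
  induction n.
  - simpl. cring.
  - change (Bminus (fun k => Cconj (a (k - 1)%nat)) (S (S n)) (RtoC u))
      with (Cmul (Bminus (fun k => Cconj (a (k - 1)%nat)) (S n) (RtoC u))
                 (Bfactor (Cconj (a (S n - 1)%nat)) (RtoC u))).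
    rewrite IHn. simpl Bplus. rewrite Cconj_mul, Bfactor_conj.
    replace (S n - 1)%nat with n by lia. reflexivity.
Qed.

Lemma Phiminus_conj a n u :
  Phiminus (fun k => Cconj (a (k - 1)%nat)) (S n) (RtoC u) = Cconj (Phiplus a n (RtoC u)).
Proof.
  unfold Phiminus, Phiplus. rewrite Bminus_conj.
  replace (S n - 1)%nat with n by lia.
  rewrite Cconj_mul, Cconj_div, Cconj_sub, Cconj_RtoC, Cconj_RtoC, Cconj_conj.
  simpl Im. rewrite Ropp_involutive. reflexivity.
Qed.

Lemma chi_norm c : Cmul (chi c) (Cconj (chi c)) = C1.
Proof.
  unfold chi. set (w := Cadd C1 (Cmul c c)).
  destruct (Cis0 w) eqn:E.
  - cring.
  - clearbody w. destruct w as [r i].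
    assert (HN : r*r+i*i <> 0).
    { unfold Cis0 in E; simpl in E.
      destruct (Req_EM_T r 0) as [H1|H1]; [destruct (Req_EM_T i 0) as [H2|H2]|];
       try discriminate; nra. }
    assert (HS : sqrt (r*r+i*i) * sqrt (r*r+i*i) = r*r+i*i).
    { apply sqrt_sqrt. nra. }
    unfold Cdiv, Cinv, Cabs, Cnorm2. simpl. set (A := sqrt (r*r+i*i)) in *.
    apply Ceq; simpl.
    + transitivity (A*A*(r*r+i*i)/((r*r+i*i)*(r*r+i*i))); [field; auto|].
      rewrite HS. field; auto.
    + field; auto.
Qed.

Lemma Cmul_C1 z : Cmul C1 z = z.
Proof. cring. Qed.

Definition Gf (a : Cpx) (u : R) := Cdiv (Csub (RtoC u) a) (Csub (RtoC u) (Cconj a)).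
Definition cf (a : Cpx) (u : R) := Cdiv (RtoC (sqrt (Im a))) (Csub (RtoC u) (Cconj a)).

Lemma Bfactor_prod a Bx Bt x t :
  Cmul (Cmul Bx (Bfactor a (RtoC x))) (Cconj (Cmul Bt (Bfactor a (RtoC t))))
  = Cmul (Cmul Bx (Cconj Bt)) (Cmul (Gf a x) (Cconj (Gf a t))).
Proof.
  unfold Bfactor. fold (Gf a x) (Gf a t).
  transitivity (Cmul (Cmul (chi a) (Cconj (chi a)))
     (Cmul (Cmul Bx (Cconj Bt)) (Cmul (Gf a x) (Cconj (Gf a t))))).
  - cring.
  - rewrite chi_norm, Cmul_C1. reflexivity.
Qed.

Lemma tel a (Ha : 0 < Im a) Bx Bt x t :
  Im (Cmul (Cmul Bx (Bfactor a (RtoC x))) (Cconj (Cmul Bt (Bfactor a (RtoC t)))))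
  - Im (Cmul Bx (Cconj Bt))
  = 2 * (x - t) * Re (Cmul (Cconj (Cmul (cf a x) Bx)) (Cmul (cf a t) Bt)).
Proof.
  rewrite Bfactor_prod. unfold Gf, cf.
  destruct a as [r s]; destruct Bx as [p1 p2]; destruct Bt as [q1 q2]. simpl in Ha.
  unfold Cdiv, Cinv, Cnorm2, RtoC, Csub, Cadd, Cneg, Cconj, Cmul; simpl.
  assert (Hq : 0 < sqrt s) by (apply sqrt_lt_R0; auto).
  assert (Hs : s = sqrt s * sqrt s) by (rewrite sqrt_sqrt; lra).
  set (q := sqrt s) in *. rewrite Hs.
  field.
  assert (H4 : 0 < q*q*(q*q)) by (apply Rmult_lt_0_compat; nra).
  rewrite !Ropp_involutive.
  split; apply Rgt_not_eq; apply Rplus_le_lt_0_compat; try exact H4; apply Rle_0_sqr.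
Qed.

Definition ang (a : Cpx) (u : R) := 2 * atan ((u - Re a) / Im a).
Definition theta (a : nat -> Cpx) (n : nat) (u : R) := rsum (fun k => ang (a k) u) n.

Lemma G_angle a (Ha : 0 < Im a) u :
  Gf a u = mkC (- cos (ang a u)) (- sin (ang a u)).
Proof.
  unfold ang. set (w := (u - Re a) / Im a).
  rewrite cos_2a, sin_2a, sin_atan, cos_atan.
  assert (HS : sqrt (1 + w²) * sqrt (1 + w²) = 1 + w²).
  { apply sqrt_sqrt. unfold Rsqr; nra. }
  assert (HP : 0 < sqrt (1 + w²)).
  { apply sqrt_lt_R0. unfold Rsqr; nra. }
  set (S := sqrt (1 + w²)) in *.
  assert (Hw : u - Re a = w * Im a) by (unfold w; field; lra).
  unfold Gf, Cdiv, Cinv, Cnorm2, RtoC, Csub, Cadd, Cneg, Cconj, Cmul.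
  destruct a as [r s]; simpl in *.
  replace (u + - r) with (w * s) by lra.
  unfold Rsqr in HS.
  apply Ceq; simpl.
  - transitivity (- ((1 - w*w) / (1 + w*w))).
    + field. split; [nra|]. rewrite !Ropp_involutive. nra.
    + rewrite <- HS. field. lra.
  - transitivity (- (2 * w / (1 + w*w))).
    + field. split; [nra|]. rewrite !Ropp_involutive. nra.
    + rewrite <- HS. field. lra.
Qed.

Lemma P_angle a (Ha : forall k, 0 < Im (a k)) n x t :
  Cmul (Bplus a n (RtoC x)) (Cconj (Bplus a n (RtoC t)))
  = mkC (cos (theta a n x - theta a n t)) (sin (theta a n x - theta a n t)).
Proof.
  induction n.
  - unfold theta; simpl. rewrite Rminus_diag, cos_0, sin_0. cring.
  - simpl Bplus. rewrite Bfactor_prod, IHn, !G_angle by auto.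
    unfold theta; simpl rsum. fold (theta a n x) (theta a n t).
    replace (theta a n x + ang (a n) x - (theta a n t + ang (a n) t))
      with ((theta a n x - theta a n t) + (ang (a n) x - ang (a n) t)) by ring.
    apply Ceq; simpl; rewrite ?cos_plus, ?sin_plus, ?cos_minus, ?sin_minus; ring.
Qed.

Lemma sumZ_front f lo m : sumZ f lo (S m) = Cadd (f lo) (sumZ f (lo + 1) m).
Proof.
  induction m.
  - simpl. rewrite Z.add_0_r. cring.
  - change (sumZ f lo (S (S m))) with (Cadd (sumZ f lo (S m)) (f (lo + Z.of_nat (S m))%Z)).
    rewrite IHm. simpl sumZ.
    replace (lo + Z.of_nat (S m))%Z with (lo + 1 + Z.of_nat m)%Z by lia. cring.
Qed.

Definition Pn a n x t := Cmul (Bplus a n (RtoC x)) (Cconj (Bplus a n (RtoC t))).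

Lemma main_sum a (Ha : forall k, 0 < Im (a k)) x t (Hxt : x <> t) n :
  let b := fun k : nat => Cconj (a (k - 1)%nat) in
  sumZ (fun k => Cmul (Cconj (Phi a b k (RtoC x))) (Phi a b k (RtoC t)))
         (- Z.of_nat n)%Z (2 * n)%nat
  = RtoC (Im (Pn a n x t) / (x - t)).
Proof.
  intro b. set (F := fun k => Cmul (Cconj (Phi a b k (RtoC x))) (Phi a b k (RtoC t))).
  induction n.
  - simpl. unfold Pn, RtoC; simpl. apply Ceq; simpl; field; lra.
  - replace (2 * S n)%nat with (S (S (2 * n))) by lia.
    rewrite sumZ_front.
    replace (- Z.of_nat (S n) + 1)%Z with (- Z.of_nat n)%Z by lia.
    change (sumZ F (- Z.of_nat n) (S (2 * n)))
      with (Cadd (sumZ F (- Z.of_nat n) (2 * n)) (F (- Z.of_nat n + Z.of_nat (2 * n))%Z)).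
    rewrite IHn.
    replace (- Z.of_nat n + Z.of_nat (2 * n))%Z with (Z.of_nat n) by lia.
    assert (E1 : F (Z.of_nat n) = Cmul (Cconj (Phiplus a n (RtoC x))) (Phiplus a n (RtoC t))).
    { unfold F, Phi. replace (Z.leb 0 (Z.of_nat n)) with true
        by (symmetry; apply Z.leb_le; lia). rewrite Nat2Z.id. reflexivity. }
    assert (E2 : F (- Z.of_nat (S n))%Z = Cmul (Phiplus a n (RtoC x)) (Cconj (Phiplus a n (RtoC t)))).
    { unfold F, Phi. replace (Z.leb 0 (- Z.of_nat (S n))) with false
        by (symmetry; apply Z.leb_gt; lia).
      replace (Z.to_nat (- - Z.of_nat (S n))) with (S n) by lia.
      unfold b. rewrite !Phiminus_conj, Cconj_conj. reflexivity. }
    rewrite E1, E2. clear E1 E2 IHn F.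
    pose proof (tel (a n) (Ha n) (Bplus a n (RtoC x)) (Bplus a n (RtoC t)) x t) as Htel.
    change (Im (Pn a (S n) x t) - Im (Pn a n x t)
       = 2 * (x - t) * Re (Cmul (Cconj (Phiplus a n (RtoC x))) (Phiplus a n (RtoC t)))) in Htel.
    generalize dependent (Phiplus a n (RtoC x)). generalize dependent (Phiplus a n (RtoC t)).
    generalize (Pn a (S n) x t) (Pn a n x t).
    intros P1 P0 [v1 v2] [u1 u2] Htel. simpl in *.
    apply Ceq; simpl.
    + assert (Im P1 = Im P0 + 2 * (x - t) * (u1 * v1 - - u2 * v2)) by lra.
      rewrite H. field. lra.
    + ring.
Qed.

Lemma ang_RInt c (Hc : 0 < Im c) x t :
  is_RInt (fun u => 2 * Im c / ((u - Re c) ^ 2 + (Im c) ^ 2)) x t (ang c t - ang c x).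
Proof.
  apply (is_RInt_derive (ang c)).
  - intros u _. unfold ang. auto_derive; auto.
    assert (0 < Im c ^ 2) by (apply pow_lt; auto).
    pose proof (pow2_ge_0 (u - Re c)).
    assert (0 <= (u + - Re c) * / Im c * ((u + - Re c) * / Im c * 1)).
    { replace ((u + - Re c) * / Im c * ((u + - Re c) * / Im c * 1)) with (((u - Re c) / Im c)^2) by (unfold Rdiv; ring).
      apply pow2_ge_0. }
    field. repeat split; lra.
  - intros u _. apply (@ex_derive_continuous R_AbsRing R_NormedModule). auto_derive.
    assert (0 < Im c * (Im c * 1)) by (rewrite Rmult_1_r; apply Rmult_lt_0_compat; auto).
    assert (0 <= (u + - Re c) * ((u + - Re c) * 1)) by (rewrite Rmult_1_r; apply Rle_0_sqr).
    lra.
Qed.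

Lemma integrand_RInt a (Ha : forall k, 0 < Im (a k)) x t n :
  is_RInt (integrand a n) x t (theta a n t - theta a n x).
Proof.
  induction n.
  - change (integrand a 0) with (fun _ : R => 0).
    replace (theta a 0 t - theta a 0 x) with (scal (t - x) 0).
    + apply (@is_RInt_const R_NormedModule).
    + unfold theta, scal; simpl. unfold mult; simpl. ring.
  - change (integrand a (S n)) with
      (fun u => plus (integrand a n u) (2 * Im (a n) / ((u - Re (a n)) ^ 2 + (Im (a n)) ^ 2))).
    replace (theta a (S n) t - theta a (S n) x)
      with (plus (theta a n t - theta a n x) (ang (a n) t - ang (a n) x)).
    + apply (@is_RInt_plus R_NormedModule); auto. apply ang_RInt; auto.
    + unfold theta, plus; simpl. ring.
Qed.

Theorem mainTheorem5 (a : nat -> Cpx) (Ha : forall k, 0 < Im (a k))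
  (n : nat) (x t : R) (Hxt : x <> t) :
  let b := fun k : nat => Cconj (a (k - 1)%nat) in
  exists pr : Riemann_integrable (integrand a n) x t,
    sumZ (fun k => Cmul (Cconj (Phi a b k (RtoC x))) (Phi a b k (RtoC t)))
         (- Z.of_nat n)%Z (2 * n)%nat
    = RtoC (/ (t - x) * sin (RiemannInt pr)).
Proof.
  intro b.
  pose proof (integrand_RInt a Ha x t n) as H.
  exists (ex_RInt_Reals_0 _ _ _ (ex_intro _ _ H)).
  rewrite <- RInt_Reals, (@is_RInt_unique R_CompleteNormedModule _ _ _ _ H).
  pose proof (main_sum a Ha x t Hxt n) as M. cbv zeta in M.
  unfold b. rewrite M. unfold Pn. rewrite P_angle by auto. simpl Im.
  replace (theta a n x - theta a n t) with (- (theta a n t - theta a n x)) by ring.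
  rewrite sin_neg. f_equal. field. lra.
Qed.
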